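(* Let $0<k\le16/(3\sqrt3)$, and let $t_1(k)\le t_2(k)$ be the real zeros of $8t^3-8t+k$ in the interval $(0,1)$ (they coincide, equal to $1/\sqrt3$, when $k=16/(3\sqrt3)$). For $x=e^{i\theta}$ on the unit circle with $\cos\theta\neq 0$ set $$y_{1}(x)=\frac{k+\sqrt{k^2-16\cos^2\theta\,(3-4\cos^2\theta)}}{4\cos\theta},\qquad y_{2}(x)=\frac{k-\sqrt{k^2-16\cos^2\theta\,(3-4\cos^2\theta)}}{4\cos\theta}.$$ Then: if $|\cos\theta|=t_1(k)$ then $|y_2(x)|=1$; and if $|\cos\theta|=t_2(k)$ then $|y_1(x)|=1$ when $0<k\le2\sqrt2$, and $|y_2(x)|=1$ when $2\sqrt2\le k\le16/(3\sqrt3)$.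
   Context: $y_1(x),y_2(x)$ are the two roots in $y$ of $(x+x^{-1})y^2-ky-(x^3+x^{-3})=0$ (which equals $-y^3R_k(x/y,1/(xy))$ for $R_k(x,y)=y^3-y+x^3-x+kxy$). Here $\sqrt{\cdot}$ is the principal square root. For $0<k<16/(3\sqrt3)$ the cubic $8t^3-8t+k$ has exactly two zeros in $(0,1)$, with $t_1(k)<1/\sqrt3<t_2(k)$. *)

(* Defs.v *)
From Stdlib Require Import Reals.
From Coquelicot Require Import Coquelicot.
Open Scope R_scope.

(* Principal square root of a complex number z = a + ib:
   sqrt z = sqrt((|z|+a)/2) + i * s * sqrt((|z|-a)/2), with s = +1 if b >= 0,
   s = -1 if b < 0 (branch cut on the negative real axis, Re sqrt z >= 0). *)
Definition csqrt (z : C) : C :=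
  let a := fst z in let b := snd z in
  let m := Cmod z in
  (sqrt ((m + a) / 2),
   (if Rle_dec 0 b then 1 else -1) * sqrt ((m - a) / 2)).

Definition discr (k th : R) : C :=
  RtoC (k ^ 2 - 16 * (cos th) ^ 2 * (3 - 4 * (cos th) ^ 2)).

Definition y1 (k th : R) : C :=
  Cdiv (Cplus (RtoC k) (csqrt (discr k th))) (RtoC (4 * cos th)).
Definition y2 (k th : R) : C :=
  Cdiv (Cminus (RtoC k) (csqrt (discr k th))) (RtoC (4 * cos th)).

(* Main.v *)
Require Import Defs.
From Stdlib Require Import Reals Lra Psatz.
From Coquelicot Require Import Coquelicot.
Open Scope R_scope.

Lemma csqrt_real d : 0 <= d -> csqrt (RtoC d) = RtoC (sqrt d).
Proof.
  intro Hd. unfold csqrt, RtoC; simpl.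
  change (Cmod (d, 0)) with (Cmod (RtoC d)); rewrite Cmod_R, Rabs_right by lra.
  destruct (Rle_dec 0 0); [|lra].
  f_equal; [f_equal; field| ].
  replace ((d - d) / 2) with 0 by field. rewrite sqrt_0; ring.
Qed.

Lemma cdiv_real a b : b <> 0 -> Cdiv (RtoC a) (RtoC b) = RtoC (a / b).
Proof.
  intro Hb. apply injective_projections; simpl; unfold Rdiv; simpl; field; auto.
Qed.

Lemma sq_eq (k c : R) : c <> 0 -> k = 8 * Rabs c * (1 - c^2) ->
  sqrt (k ^ 2 - 16 * c ^ 2 * (3 - 4 * c ^ 2)) = Rabs (4 * c * (1 - 2 * c^2)).
Proof.
  intros Hc Hk. rewrite <- sqrt_Rsqr_abs. f_equal. unfold Rsqr.
  rewrite Hk. replace (Rabs c ^ 2) with (c^2) by (rewrite pow2_abs; ring).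
  assert (Rabs c * Rabs c = c * c) by (rewrite <- Rabs_mult; apply Rabs_right; nra).
  nra.
Qed.

Lemma key_minus (k c : R) : c <> 0 -> k = 8 * Rabs c * (1 - c^2) -> 2 * c^2 <= 1 ->
  Rabs ((k - sqrt (k ^ 2 - 16 * c ^ 2 * (3 - 4 * c ^ 2))) / (4 * c)) = 1.
Proof.
  intros Hc Hk H. rewrite (sq_eq k c Hc Hk). rewrite Hk.
  destruct (Rle_lt_dec 0 c).
  - rewrite (Rabs_right c) by lra. rewrite (Rabs_right (4*c*_)) by nra.
    replace ((8 * c * (1 - c ^ 2) - 4 * c * (1 - 2 * c ^ 2)) / (4 * c)) with 1 by (field; lra).
    apply Rabs_R1.
  - rewrite (Rabs_left c) by lra. rewrite (Rabs_left1 (4*c*_)) by nra.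
    replace ((8 * - c * (1 - c ^ 2) - - (4 * c * (1 - 2 * c ^ 2))) / (4 * c)) with (-1) by (field; lra).
    rewrite Rabs_left; lra.
Qed.

Lemma key_plus (k c : R) : c <> 0 -> k = 8 * Rabs c * (1 - c^2) -> 1 <= 2 * c^2 ->
  Rabs ((k + sqrt (k ^ 2 - 16 * c ^ 2 * (3 - 4 * c ^ 2))) / (4 * c)) = 1.
Proof.
  intros Hc Hk H. rewrite (sq_eq k c Hc Hk). rewrite Hk.
  destruct (Rle_lt_dec 0 c).
  - rewrite (Rabs_right c) by lra. rewrite (Rabs_left1 (4*c*_)) by nra.
    replace ((8 * c * (1 - c ^ 2) + - (4 * c * (1 - 2 * c ^ 2))) / (4 * c)) with 1 by (field; lra).
    apply Rabs_R1.
  - rewrite (Rabs_left c) by lra. rewrite (Rabs_right (4*c*_)) by nra.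
    replace ((8 * - c * (1 - c ^ 2) + (4 * c * (1 - 2 * c ^ 2))) / (4 * c)) with (-1) by (field; lra).
    rewrite Rabs_left; lra.
Qed.

Lemma D_nonneg (k c : R) : c <> 0 -> k = 8 * Rabs c * (1 - c^2) ->
  0 <= k ^ 2 - 16 * c ^ 2 * (3 - 4 * c ^ 2).
Proof.
  intros Hc Hk. pose proof (sq_eq k c Hc Hk).
  destruct (Rle_dec 0 (k ^ 2 - 16 * c ^ 2 * (3 - 4 * c ^ 2))); auto.
  exfalso. rewrite sqrt_neg_0 in H by lra.
  assert (1 - 2*c^2 = 0).
  { symmetry in H. apply Rabs_eq_0 in H. apply Rmult_integral in H as [H|H]; nra. }
  rewrite Hk in n. assert (Rabs c * Rabs c = c*c) by (rewrite <- Rabs_mult; apply Rabs_right; nra).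
  nra.
Qed.

Lemma y2_mod k th : cos th <> 0 -> k = 8 * Rabs (cos th) * (1 - (cos th)^2) ->
  2 * (cos th)^2 <= 1 -> Cmod (y2 k th) = 1.
Proof.
  intros Hc Hk H. unfold y2, discr.
  rewrite csqrt_real by (apply D_nonneg; auto).
  replace (Cminus (RtoC k) (RtoC _)) with (RtoC (k - sqrt (k ^ 2 - 16 * cos th ^ 2 * (3 - 4 * cos th ^ 2)))).
  2:{ apply injective_projections; simpl; ring. }
  rewrite cdiv_real by lra. rewrite Cmod_R. apply key_minus; auto.
Qed.

Lemma y1_mod k th : cos th <> 0 -> k = 8 * Rabs (cos th) * (1 - (cos th)^2) ->
  1 <= 2 * (cos th)^2 -> Cmod (y1 k th) = 1.
Proof.
  intros Hc Hk H. unfold y1, discr.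
  rewrite csqrt_real by (apply D_nonneg; auto).
  replace (Cplus (RtoC k) (RtoC _)) with (RtoC (k + sqrt (k ^ 2 - 16 * cos th ^ 2 * (3 - 4 * cos th ^ 2)))).
  2:{ apply injective_projections; simpl; ring. }
  rewrite cdiv_real by lra. rewrite Cmod_R. apply key_plus; auto.
Qed.

Lemma other_root t k : 0 < t < 1 -> 8 * t ^ 3 - 8 * t + k = 0 ->
  let s := (sqrt (4 - 3 * t^2) - t) / 2 in
  0 < s < 1 /\ 8 * s ^ 3 - 8 * s + k = 0 /\ (3 * t^2 < 1 -> t < s) /\ (1 < 3 * t^2 -> s < t).
Proof.
  intros Ht Hk s. unfold s.
  assert (Hr0 : 0 <= 4 - 3 * t^2) by nra.
  pose proof (sqrt_sqrt _ Hr0) as Hr. pose proof (sqrt_pos (4 - 3*t^2)) as Hp.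
  set (r := sqrt (4 - 3 * t^2)) in *.
  split; [split|split; [|split]].
  - assert (t < r) by nra. lra.
  - assert (r < 2 + t) by nra. lra.
  - assert (((r - t)/2)^3 * 8 = (r-t)^3) by field.
    assert ((r-t)^3 = r*(r*r) - 3*(r*r)*t + 3*r*t^2 - t^3) by ring.
    rewrite Hr in H0. nra.
  - intro. assert (3*t < r) by nra. lra.
  - intro. assert (r < 3*t) by nra. lra.
Qed.

Theorem lemma4 (k t1 t2 : R) :
  0 < k -> k <= 16 / (3 * sqrt 3) ->
  0 < t1 < 1 -> 0 < t2 < 1 -> t1 <= t2 ->
  (forall t, 0 < t < 1 -> (8 * t ^ 3 - 8 * t + k = 0 <-> (t = t1 \/ t = t2))) ->
  forall th : R, cos th <> 0 ->
    (Rabs (cos th) = t1 -> Cmod (y2 k th) = 1) /\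
    (Rabs (cos th) = t2 ->
       (k <= 2 * sqrt 2 -> Cmod (y1 k th) = 1) /\
       (2 * sqrt 2 <= k -> Cmod (y2 k th) = 1)).
Proof.
  intros Hk _ H1 H2 H12 Hroots th Hc.
  assert (R1 : 8 * t1 ^ 3 - 8 * t1 + k = 0) by (apply Hroots; auto).
  assert (R2 : 8 * t2 ^ 3 - 8 * t2 + k = 0) by (apply Hroots; auto).
  assert (Hsq : forall t, Rabs (cos th) = t -> cos th ^ 2 = t ^ 2)
    by (intros t <-; rewrite pow2_abs; auto).
  split.
  - intro E. pose proof (Hsq _ E) as Q.
    assert (3 * t1^2 <= 1).
    { destruct (Rle_dec (3 * t1^2) 1) as [|n]; auto. exfalso.
      destruct (other_root t1 k H1 R1) as (Hs & Hs2 & _ & Hlt).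
      specialize (Hlt ltac:(lra)).
      destruct (proj1 (Hroots _ Hs) Hs2); lra. }
    apply y2_mod; auto; [rewrite E, Q; nra | nra].
  - intro E. pose proof (Hsq _ E) as Q.
    assert (L : 1 <= 3 * t2^2).
    { destruct (Rle_dec 1 (3 * t2^2)) as [|n]; auto. exfalso.
      destruct (other_root t2 k H2 R2) as (Hs & Hs2 & Hgt & _).
      specialize (Hgt ltac:(lra)).
      destruct (proj1 (Hroots _ Hs) Hs2); lra. }
    assert (Kk : k = 8 * Rabs (cos th) * (1 - cos th ^ 2)) by (rewrite E, Q; nra).
    pose proof (sqrt_sqrt 2 ltac:(lra)) as U. pose proof (sqrt_lt_R0 2 ltac:(lra)) as U0.
    set (u := sqrt 2) in *.
    assert (F : 8 * t2 ^ 3 - 8 * t2 + 2 * u = 2 * (2 * t2 - u) * (2 * t2^2 + t2 * u - 1)) by nra.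
    assert (G : 0 < 2 * t2^2 + t2 * u - 1).
    { assert (1/9 < (t2*u)^2) by nra. nra. }
    split; intro K.
    + apply y1_mod; auto. rewrite Q.
      destruct (Rle_dec 1 (2 * t2^2)) as [|n]; auto. exfalso.
      assert (2 * t2 < u) by nra. nra.
    + apply y2_mod; auto. rewrite Q.
      destruct (Rle_dec (2 * t2^2) 1) as [|n]; auto. exfalso.
      assert (u < 2 * t2) by nra. nra.
Qed.
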